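(* Let $k\ge1$ be an integer, $a,b,c,d\ge0$, $\eta\in\mathbb{R}$, and let $(u_n,v_n)$ be any $(PS)_\eta$-sequence of $I$. Then $(u_n,v_n)$ is bounded in $H^1(\mathbb{R})\times H^1(\mathbb{R})$, and (i) $\|(u_n,v_n)\|_{H^1\times H^1}^2\to\frac{2k+2}{k}\eta$; (ii) $P(u_n,v_n)\to\frac{\eta}{k}$. In particular $\eta\ge0$, and $\eta=0$ if and only if $u_n\to0$ and $v_n\to0$ in $H^1(\mathbb{R})$.
   Context: $H(u,v)=\frac{a}{2k+2}(u^{2k+2}+v^{2k+2})+\frac{b}{k+1}(uv)^{k+1}+\frac{c}{k}u^{k+2}v^k+\frac{d}{k}u^kv^{k+2}$; $P(u,v)=\int H(u,v)dx$; $\|(u,v)\|_{H^1\times H^1}^2=\int(u^2+v^2+u'^2+v'^2)dx$; $I(u,v)=\frac12\|(u,v)\|_{H^1\times H^1}^2-P(u,v)$. A $(PS)_\eta$-sequence of $I$ is a sequence $(u_n,v_n)\subset H^1\times H^1$ with $I(u_n,v_n)\to\eta$ and $I'(u_n,v_n)\to0$ in $H^{-1}\times H^{-1}$. *)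

(* Defs.v *)
From HB Require Import structures.
From mathcomp Require Import all_boot all_order all_algebra.
From mathcomp Require Import all_classical all_reals all_analysis.
Set Implicit Arguments. Unset Strict Implicit. Unset Printing Implicit Defensive.
Import Order.TTheory GRing.Theory Num.Theory.
Import numFieldNormedType.Exports.
Local Open Scope classical_set_scope.
Local Open Scope ring_scope.

Section Defs.
Context {R : realType}.
Local Notation mu := (@lebesgue_measure R).

Definition L2 (f : R -> R) : Prop :=
  measurable_fun setT f /\ (\int[mu]_x ((f x ^+ 2)%:E) < +oo)%E.

Definition test_fun (phi : R -> R) : Prop :=
  (forall (n : nat) (x : R), derivable (iter n (@derive1 R R) phi) x 1)
  /\ exists M : R, forall x, M < `|x| -> phi x = 0.

Definition weak_deriv (u w : R -> R) : Prop :=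
  forall phi, test_fun phi ->
    Rintegral mu setT (fun x : R => u x * derive1 phi x)
    = - Rintegral mu setT (fun x : R => w x * phi x).

Definition H1 (u u' : R -> R) : Prop := L2 u /\ L2 u' /\ weak_deriv u u'.

Definition H1norm2 (u u' : R -> R) : R :=
  Rintegral mu setT (fun x : R => u x ^+ 2 + u' x ^+ 2).

Definition H1H1norm2 (u u' v v' : R -> R) : R :=
  Rintegral mu setT (fun x : R => u x ^+ 2 + v x ^+ 2 + u' x ^+ 2 + v' x ^+ 2).

Definition H_func (k : nat) (a b c d : R) (u v : R) : R :=
  a / (2 * k + 2)%N%:R * (u ^+ (2 * k + 2)%N + v ^+ (2 * k + 2)%N)
  + b / k.+1%:R * (u * v) ^+ k.+1
  + c / k%:R * (u ^+ (k + 2)%N * v ^+ k)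
  + d / k%:R * (u ^+ k * v ^+ (k + 2)%N).

Definition P_func (k : nat) (a b c d : R) (u v : R -> R) : R :=
  Rintegral mu setT (fun x : R => H_func k a b c d (u x) (v x)).

Definition I_func (k : nat) (a b c d : R) (u u' v v' : R -> R) : R :=
  2^-1 * H1H1norm2 u u' v v' - P_func k a b c d u v.

(* (PS)_eta sequence: I(u_n,v_n) -> eta and I'(u_n,v_n) -> 0 in H^{-1} x H^{-1};
   I'(u,v) is evaluated on a direction (phi,psi) as the derivative at t = 0
   of t |-> I(u + t phi, v + t psi) (I is C^1, so this is its Frechet derivative),
   and the dual norm of I'(u_n,v_n) is bounded by eps n -> 0. *)
Definition PSseq (k : nat) (a b c d eta : R) (U U' V V' : nat -> R -> R) : Prop :=
  (forall n, H1 (U n) (U' n) /\ H1 (V n) (V' n))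
  /\ ((fun n => I_func k a b c d (U n) (U' n) (V n) (V' n)) @ \oo --> eta)
  /\ exists eps : nat -> R, (eps @ \oo --> 0) /\
     forall n (phi phi' psi psi' : R -> R), H1 phi phi' -> H1 psi psi' ->
       let g := fun t : R => I_func k a b c d
                  (fun x : R => U n x + t * phi x) (fun x : R => U' n x + t * phi' x)
                  (fun x : R => V n x + t * psi x) (fun x : R => V' n x + t * psi' x) in
       derivable g 0 1 /\
       `| derive1 g 0 | <= eps n * Num.sqrt (H1H1norm2 phi phi' psi psi').

End Defs.

(* Main.v *)
Require Import Defs.
From HB Require Import structures.
From mathcomp Require Import all_boot all_order all_algebra.
From mathcomp Require Import all_classical all_reals all_analysis.
From mathcomp Require Import zify ring lra.
Import Order.TTheory GRing.Theory Num.Theory.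
Import numFieldNormedType.Exports.
Local Open Scope classical_set_scope.
Local Open Scope ring_scope.

Section Aux.
Context {R : realType}.
Local Notation mu := (@lebesgue_measure R).

Lemma fine_notfin (x : \bar R) : x \isn't a fin_num -> fine x = 0.
Proof. by case: x. Qed.

Lemma RintZ (f : R -> R) (r : R) : measurable_fun setT f ->
  Rintegral mu setT (fun x => r * f x) = r * Rintegral mu setT f.
Proof.
move=> mf.
have [->|r0] := eqVneq r 0.
  rewrite mul0r; under eq_Rintegral do rewrite mul0r.
  by rewrite Rintegral_cst // mul0r.
have [fi|fi] := boolP (mu.-integrable setT (EFin \o f)).
  by rewrite RintegralZl.
have mrf : measurable_fun setT (fun x => r * f x).
  exact: measurable_realfun.measurable_funM.
have rfi : ~~ (mu.-integrable setT (EFin \o (fun x => r * f x))).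
  apply/negP => h; move/negP: fi; apply.
  have := integrableZl measurableT (r^-1) h.
  congr (_.-integrable _ _); apply/funext => x /=.
  by rewrite -EFinM mulrA mulVf // mul1r.
have nf : forall g : R -> R, measurable_fun setT g ->
    ~~ (mu.-integrable setT (EFin \o g)) ->
    (\int[mu]_x (g x)%:E)%E \isn't a fin_num.
  move=> g mg gi; rewrite -integral_fin_num_abs //.
  apply/negP => h; move/negP: gi; apply; apply/integrableP; split => //.
  exact/measurable_realfun.measurable_EFinP.
rewrite /Rintegral !fine_notfin ?mulr0 //; exact: nf.
Qed.


Lemma H_scale k a b c d (l u v : R) :
  H_func k a b c d (l * u) (l * v) = l ^+ (2 * k + 2) * H_func k a b c d u v.
Proof.
rewrite /H_func.
have e1 : (l * u * (l * v)) ^+ k.+1 = l ^+ (2 * k + 2) * (u * v) ^+ k.+1.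
  rewrite mulrACA exprMn -expr2 -exprM; congr (_ ^+ _ * _); lia.
have e2 : (l * u) ^+ (k + 2) * (l * v) ^+ k = l ^+ (2 * k + 2) * (u ^+ (k + 2) * v ^+ k).
  rewrite !exprMn mulrACA -exprD; congr (_ ^+ _ * _); lia.
have e3 : (l * u) ^+ k * (l * v) ^+ (k + 2) = l ^+ (2 * k + 2) * (u ^+ k * v ^+ (k + 2)).
  rewrite !exprMn mulrACA -exprD; congr (_ ^+ _ * _); lia.
rewrite e1 e2 e3 !exprMn.
set L := l ^+ _.
ring.
Qed.

Lemma measH k a b c d (u v : R -> R) :
  measurable_fun setT u -> measurable_fun setT v ->
  measurable_fun setT (fun x => H_func k a b c d (u x) (v x)).
Proof.
move=> mu_ mv; rewrite /H_func.
repeat (apply: measurable_realfun.measurable_funD).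
- apply: measurable_realfun.measurable_funM => //.
  apply: measurable_realfun.measurable_funD; exact: measurable_realfun.measurable_funX.
- apply: measurable_realfun.measurable_funM => //.
  apply: measurable_realfun.measurable_funX; exact: measurable_realfun.measurable_funM.
- apply: measurable_realfun.measurable_funM => //.
  apply: measurable_realfun.measurable_funM; exact: measurable_realfun.measurable_funX.
- apply: measurable_realfun.measurable_funM => //.
  apply: measurable_realfun.measurable_funM; exact: measurable_realfun.measurable_funX.
Qed.


Lemma deriv_h (N P : R) (m : nat) :
  derive1 (fun t : R => 2^-1 * ((1 + t) ^+ 2 * N) - (1 + t) ^+ m * P) 0
  = N - m%:R * P.
Proof.
pose f1 : R -> R := cst 1 + id.
have d1 : is_derive (0:R) (1:R) f1 (0 + 1) := is_deriveD (is_derive_cst _ _ _) (is_derive_id _ _).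
have D := is_deriveB (is_deriveZ (2^-1 * N) (is_deriveX 2 d1))
                     (is_deriveZ P (is_deriveX m d1)).
have -> : (fun t : R => 2^-1 * ((1 + t) ^+ 2 * N) - (1 + t) ^+ m * P)
   = (2^-1 * N) \*: f1 ^+ 2 - P \*: f1 ^+ m.
  apply/funext => t; rewrite !fctE /= /GRing.scale /= /f1 !fctE /=; ring.
rewrite derive1E (@derive_val _ _ _ _ _ _ _ D) /GRing.scale /= /f1 !fctE /= !addr0 add0r !expr1n.
by field.
Qed.


Lemma key k a b c d (u u' v v' : R -> R) :
  measurable_fun setT u -> measurable_fun setT u' ->
  measurable_fun setT v -> measurable_fun setT v' ->
  derive1 (fun t : R => I_func k a b c d (fun x => u x + t * u x)
     (fun x => u' x + t * u' x) (fun x => v x + t * v x)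
     (fun x => v' x + t * v' x)) 0
  = H1H1norm2 u u' v v' - (2 * k + 2)%N%:R * P_func k a b c d u v.
Proof.
move=> mu_ mu' mv mv'.
rewrite -deriv_h; congr (derive1 _ 0); apply/funext => t.
rewrite /I_func; congr (2^-1 * _ - _).
- rewrite /H1H1norm2 -RintZ; last first.
    by repeat apply: measurable_realfun.measurable_funD;
       apply: measurable_realfun.measurable_funX.
  by apply: eq_Rintegral => x _ /=; ring.
- rewrite /P_func -RintZ; last exact: measH.
  apply: eq_Rintegral => x _; rewrite -H_scale; congr H_func; ring.
Qed.


Lemma L2_int (u : R -> R) : L2 u -> mu.-integrable setT (EFin \o (fun x => u x ^+ 2)).
Proof.
case=> mu_ fin; apply/integrableP; split.
  apply/measurable_realfun.measurable_EFinP; exact: measurable_realfun.measurable_funX.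
under eq_integral => x _ do rewrite /= ger0_norm ?sqr_ge0 //.
exact: fin.
Qed.

Lemma intD2 (f g : R -> R) : mu.-integrable setT (EFin \o f) ->
  mu.-integrable setT (EFin \o g) ->
  mu.-integrable setT (EFin \o (fun x => f x + g x)).
Proof.
move=> hf hg; have := integrableD measurableT hf hg.
by congr (_.-integrable _ _); apply/funext => x /=; rewrite EFinD.
Qed.

Lemma norm_split (u u' v v' : R -> R) : H1 u u' -> H1 v v' ->
  H1H1norm2 u u' v v' = H1norm2 u u' + H1norm2 v v'.
Proof.
move=> [hu [hu' _]] [hv [hv' _]].
rewrite /H1H1norm2 /H1norm2 -RintegralD //; last 2 first.
- by apply: (@intD2 (fun x => u x ^+ 2) (fun x => u' x ^+ 2)); apply: L2_int.
- by apply: (@intD2 (fun x => v x ^+ 2) (fun x => v' x ^+ 2)); apply: L2_int.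
by apply: eq_Rintegral => x _; ring.
Qed.

Lemma H1norm2_ge0 (u u' : R -> R) : 0 <= H1norm2 u u'.
Proof. by apply: Rintegral_ge0 => x _; rewrite addr_ge0 ?sqr_ge0. Qed.


Lemma bnd (f : nat -> R) : cvgn f -> exists M, forall n, `|f n| <= M.
Proof.
move=> /cvg_seq_bounded [M [_ hM]].
exists (M + 1) => n; apply: (hM (M + 1)) => //.
by rewrite ltrDl.
Qed.

Lemma cvgMc (f : nat -> R) (l c : R) : f @ \oo --> l -> (fun n => f n * c) @ \oo --> l * c.
Proof. by move=> h; apply: cvgM => //; exact: cvg_cst. Qed.

Lemma cvgcM (f : nat -> R) (l c : R) : f @ \oo --> l -> (fun n => c * f n) @ \oo --> c * l.
Proof. by move=> h; apply: cvgM => //; exact: cvg_cst. Qed.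

End Aux.

Theorem proposition3p8 (R : realType) (k : nat) (hk : (1 <= k)%N)
  (a b c d : R) (ha : 0 <= a) (hb : 0 <= b) (hc : 0 <= c) (hd : 0 <= d)
  (eta : R) (U U' V V' : nat -> R -> R)
  (hPS : PSseq k a b c d eta U U' V V') :
  (exists C : R, forall n : nat,
      Num.sqrt (H1H1norm2 (U n) (U' n) (V n) (V' n)) <= C)
  /\ ((fun n : nat => H1H1norm2 (U n) (U' n) (V n) (V' n)) @ \oo
        --> (2 * k + 2)%N%:R / k%:R * eta)
  /\ ((fun n : nat => P_func k a b c d (U n) (V n)) @ \oo --> eta / k%:R)
  /\ 0 <= eta
  /\ (eta = 0 <->
       ((fun n : nat => Num.sqrt (H1norm2 (U n) (U' n))) @ \oo --> 0)
       /\ ((fun n : nat => Num.sqrt (H1norm2 (V n) (V' n))) @ \oo --> 0)).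

Proof.
move: hPS => [hH [hI [eps [heps hdv]]]].
set K : R := (2 * k + 2)%N%:R.
have k0 : k%:R != 0 :> R by rewrite pnatr_eq0 -lt0n.
have kpos : 0 < k%:R :> R by rewrite ltr0n.
have k1 : 1 <= k%:R :> R by rewrite ler1n.
have KE : K = 2 * k%:R + 2 by rewrite /K natrD natrM.
have K0 : 0 < K by rewrite KE; lra.
pose N n := H1H1norm2 (U n) (U' n) (V n) (V' n).
pose Pn n := P_func k a b c d (U n) (V n).
pose In n := I_func k a b c d (U n) (U' n) (V n) (V' n).
pose Dn n := N n - K * Pn n.
have hD : forall n, `|Dn n| <= eps n * Num.sqrt (N n).
  move=> n; have [hu hv] := hH n.
  have := hdv n _ _ _ _ hu hv; cbv zeta; case=> _.
  case: hu => [[mu_ _] [[mu' _] _]]; case: hv => [[mv _] [[mv' _] _]].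
  by rewrite key.
have Nge0 : forall n, 0 <= N n.
  by move=> n; apply: Rintegral_ge0 => x _; rewrite !addr_ge0 ?sqr_ge0.
have kN : forall n, k%:R * N n = K * In n - Dn n.
  move=> n; rewrite /Dn /In /I_func -/(N n) -/(Pn n) KE; by field.
have [A hA] := @bnd _ _ (cvgP _ hI : cvgn In).
have [B hB] := @bnd _ _ (cvgP _ heps).
have A0 : 0 <= A := le_trans (normr_ge0 _) (hA 0%N).
have B0 : 0 <= B := le_trans (normr_ge0 _) (hB 0%N).
pose C := 1 + K * A + B.
have hD2 : forall n, `|Dn n| <= `|eps n| * Num.sqrt (N n).
  move=> n; apply: le_trans (hD n) _.
  by apply: ler_wpM2r; [exact: sqrtr_ge0 | exact: ler_norm].
have sC : forall n, Num.sqrt (N n) <= C.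
  move=> n; set s := Num.sqrt (N n).
  have s0 : 0 <= s := sqrtr_ge0 _.
  have ss : s ^+ 2 = N n := sqr_sqrtr (Nge0 n).
  have h1 : k%:R * s ^+ 2 <= K * A + B * s.
    rewrite ss kN.
    have : K * In n <= K * A.
      by apply: ler_wpM2l; [exact: ltW | exact: le_trans (ler_norm _) (hA n)].
    have : - Dn n <= B * s.
      apply: le_trans (ler_norm _) _; rewrite normrN.
      apply: le_trans (hD2 n) _; by apply: ler_wpM2r; [exact: sqrtr_ge0 | exact: hB].
    lra.
  have h2 : s ^+ 2 <= K * A + B * s.
    apply: le_trans h1; rewrite -[X in X <= _]mul1r; apply: ler_wpM2r => //.
    exact: sqr_ge0.
  have KA0 : 0 <= K * A := mulr_ge0 (ltW K0) A0.
  rewrite /C; have [s1|s1] := lerP s 1; first lra.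
  have KAs : K * A <= K * A * s.
    by rewrite -[X in X <= _]mulr1 ler_wpM2l // ltW.
  have : s * s <= (K * A + B) * s by rewrite -expr2 mulrDl; lra.
  rewrite ler_pM2r; lra.
have Dc : Dn @ \oo --> 0.
  apply: (@squeeze_cvgr _ _ _ _ (fun n => - (`|eps n| * C)) (fun n => `|eps n| * C)).
  - apply: nearW => n; rewrite -ler_norml.
    apply: le_trans (hD2 n) _; apply: ler_wpM2l => //; exact: normr_ge0.
  - rewrite -oppr0; apply: cvgN; rewrite -(mul0r C); apply: cvgMc.
    by rewrite -(@normr0 _ R); apply: cvg_norm.
  - rewrite -(mul0r C); apply: cvgMc.
    by rewrite -(@normr0 _ R); apply: cvg_norm.
have NC : N @ \oo --> K / k%:R * eta.
  have -> : N = fun n => k%:R^-1 * (K * In n - Dn n).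
    by apply/funext => n; rewrite -kN; field.
  have -> : K / k%:R * eta = k%:R^-1 * (K * eta - 0) by rewrite subr0; field.
  apply: cvgcM; apply: cvgB => //; exact: cvgcM.
have PC : Pn @ \oo --> eta / k%:R.
  have -> : Pn = fun n => 2^-1 * N n - In n.
    by apply/funext => n; rewrite /In /I_func -/(N n) -/(Pn n); ring.
  have -> : eta / k%:R = 2^-1 * (K / k%:R * eta) - eta by rewrite KE; field.
  apply: cvgB => //; exact: cvgcM.
have eta0 : 0 <= eta.
  have : 0 <= K / k%:R * eta by apply: (@cvgr_to_ge nat \oo _ R N _ 0 NC); exact: nearW.
  by rewrite pmulr_rge0 // divr_gt0.
split; first by exists C.
split; first exact: NC.
split; first exact: PC.
split; first exact: eta0.
have hsplit : forall n, N n = H1norm2 (U n) (U' n) + H1norm2 (V n) (V' n).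
  by move=> n; have [hu hv] := hH n; rewrite /N norm_split.
split.
- move=> e0; have N0 : N @ \oo --> 0 by move: NC; rewrite e0 mulr0.
  have sN : (fun n => Num.sqrt (N n)) @ \oo --> 0.
    rewrite -sqrtr0; apply: continuous_cvg => //; exact: sqrt_continuous.
  split.
  + apply: (@squeeze_cvgr _ _ _ _ (fun n => 0) (fun n => Num.sqrt (N n))) => //.
    * apply: nearW => n; rewrite sqrtr_ge0 /=; apply: ler_wsqrtr.
      by rewrite hsplit lerDl H1norm2_ge0.
    * exact: cvg_cst.
  + apply: (@squeeze_cvgr _ _ _ _ (fun n => 0) (fun n => Num.sqrt (N n))) => //.
    * apply: nearW => n; rewrite sqrtr_ge0 /=; apply: ler_wsqrtr.
      by rewrite hsplit lerDr H1norm2_ge0.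
    * exact: cvg_cst.
- case=> hu hv.
  have N0 : N @ \oo --> 0.
    have -> : N = fun n => Num.sqrt (H1norm2 (U n) (U' n)) * Num.sqrt (H1norm2 (U n) (U' n))
                         + Num.sqrt (H1norm2 (V n) (V' n)) * Num.sqrt (H1norm2 (V n) (V' n)).
      by apply/funext => n; rewrite -!expr2 !sqr_sqrtr ?H1norm2_ge0 // hsplit.
    pose su n := Num.sqrt (H1norm2 (U n) (U' n)).
    pose sv n := Num.sqrt (H1norm2 (V n) (V' n)).
    have hUU : (fun n => su n * su n) @ \oo --> (0 * 0 : R) by apply: cvgM.
    have hVV : (fun n => sv n * sv n) @ \oo --> (0 * 0 : R) by apply: cvgM.
    have : (fun n => su n * su n + sv n * sv n) @ \oo --> (0 * 0 + 0 * 0 : R) by apply: cvgD.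
    by rewrite mulr0 addr0.
  have e : K / k%:R * eta = 0 := cvg_unique (@Rhausdorff R) NC N0.
  have KK : K != 0 := lt0r_neq0 K0.
  have Kk : K / k%:R != 0 by rewrite mulf_neq0 // invr_eq0.
  by apply: (mulfI Kk); rewrite mulr0; exact: e.
Qed.
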